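(* Let $\Omega=\mathbb{Z}_d^4$ or $\mathbb{R}^4$ be the ontic state space of an information system $S$ and a memory system $M$, with coordinates $(q_S,p_S,q_M,p_M)$. Let the initial epistemic state of $S$ be $(\langle \vec v_1\rangle,\vec v)$ with $\vec v_1=(v_1^1,v_1^2)^T$, $\vec v=(v^1,v^2)^T\in\mathbb{Z}_d^2$ or $\mathbb{R}^2$, and let the memory be initialized with known position $q_M=0$, so the initial joint state is $$\Big(\Big\langle (v_1^1,v_1^2,0,0)^T,(0,0,1,0)^T\Big\rangle,\ (v^1,v^2,0,0)^T\Big).$$ Let $$\Sigma=\begin{pmatrix}1&0&0&0\\0&1&0&-1\\1&0&1&0\\0&0&0&1\end{pmatrix}.$$ Then applying the transformation $\Sigma$ correlates the position of the memory with the position of the information system: in the final state, $q_M=q_S$ holds for every compatible ontic state. Moreover, if $d$ is prime or the systems are continuous, the marginal of the final state on $S$ (obtained by tracing out the memory) is the mixture of the post-measurement states of $S$ corresponding to all possible outcomes (those with nonzero probability) of a position measurement $\langle(1,0)^T\rangle$ on the initial state of $S$.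
   Context: Toy theory (quadrature formalism): ontic states $\vec m\in\Omega$; an observable $\vec f\in\Omega$ takes value $\vec f^T\vec m$. Poisson bracket $[\vec f,\vec g]=\sum_i(f_{2i-1}g_{2i}-f_{2i}g_{2i-1})$. A valid epistemic state $(V,\vec v)$ has $V$ a subspace/submodule that is isotropic ($[\vec f,\vec g]=0$ on $V$); its compatible ontic states are $V^\perp+\vec v$ (with $V^\perp=\{\vec m:\vec f^T\vec m=0\ \forall\vec f\in V\}$), uniformly distributed. A reversible transformation is a symplectic matrix $\Sigma$ (preserving the Poisson bracket), acting on ontic states by $\vec m\mapsto\Sigma\vec m$ and on epistemic states by $(V,\vec v)\mapsto((\Sigma^T)^{-1}V,\Sigma\vec v)$. Tracing out a subsystem means taking the marginal of the uniform distribution on compatible ontic states (projection onto the remaining coordinates). A measurement is an isotropic $V_\pi$; outcome $\vec v_\pi$ corresponds to the cell $V_\pi^\perp+\vec v_\pi$. Post-measurement state (update rule): after obtaining $\vec v_\pi$ on $(V,\vec v)$ the state is $(V_\pi+V_{\text{commute}},\vec v')$ with $V_{\text{commute}}=\{\vec f\in V:[\vec f,\vec g]=0\ \forall\vec g\in V_\pi\}$ and $\vec v'\in(V_\pi^\perp+\vec v_\pi)\cap(V_{\text{commute}}^\perp+\vec v)$. A mixture of epistemic states means the uniform distribution over the union of their compatible ontic sets. *)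

(* Defs.v *)
From HB Require Import structures.
From mathcomp Require Import all_boot all_order all_algebra.
From mathcomp Require Import boolp reals.
Set Implicit Arguments. Unset Strict Implicit. Unset Printing Implicit Defensive.
Import Order.TTheory GRing.Theory Num.Theory.
Local Open Scope ring_scope.

Section Toy.
Variable F : comUnitRingType.

(* ontic states / observables are column vectors in F^n *)
Definition subsp (n : nat) := 'cV[F]_n -> Prop.

Definition dot n (f m : 'cV[F]_n) : F := \sum_i f i 0 * m i 0.

Definition span n (s : seq 'cV[F]_n) : subsp n :=
  fun f => exists c : nat -> F, f = \sum_(i < size s) c i *: s`_i.

Definition addsp n (V W : subsp n) : subsp n :=
  fun f => exists a b, V a /\ W b /\ f = a + b.

Definition perp n (V : subsp n) : subsp n :=
  fun m => forall f, V f -> dot f m = 0.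

Record estate n := EState { espace : subsp n; evec : 'cV[F]_n }.

Definition compat n (s : estate n) : 'cV[F]_n -> Prop :=
  fun m => exists w, perp (espace s) w /\ m = w + evec s.

Definition transform n (S : 'M[F]_n) (s : estate n) : estate n :=
  EState (fun f => exists g, espace s g /\ f = invmx S^T *m g) (S *m evec s).

Definition pb2 (f g : 'cV[F]_2) : F :=
  f ord0 0 * g ord_max 0 - f ord_max 0 * g ord0 0.

Definition vcomm (V Vpi : subsp 2) : subsp 2 :=
  fun f => V f /\ forall g, Vpi g -> pb2 f g = 0.

(* outcome v_pi (cell V_pi^perp + v_pi) has nonzero probability on state s:
   the cell meets the set of compatible ontic states *)
Definition possible (s : estate 2) (Vpi : subsp 2) (vpi : 'cV[F]_2) : Prop :=
  exists m, compat s m /\ compat (EState Vpi vpi) m.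

Definition valid_post (s : estate 2) (Vpi : subsp 2) (vpi v' : 'cV[F]_2) : Prop :=
  compat (EState Vpi vpi) v' /\ compat (EState (vcomm (espace s) Vpi) (evec s)) v'.

Definition post (s : estate 2) (Vpi : subsp 2) (v' : 'cV[F]_2) : estate 2 :=
  EState (addsp Vpi (vcomm (espace s) Vpi)) v'.

(* support of the mixture of the post-measurement states over all possible
   outcomes: union of their compatible ontic sets *)
Definition mix_post (s : estate 2) (Vpi : subsp 2) : 'cV[F]_2 -> Prop :=
  fun m => exists vpi v', possible s Vpi vpi /\ valid_post s Vpi vpi v' /\
                          compat (post s Vpi v') m.

Definition projS (m : 'cV[F]_4) : 'cV[F]_2 :=
  \col_(i < 2) m (widen_ord (isT : (2 <= 4)%N) i) 0.

(* set-level marginal: image of the compatible set under projS *)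
Definition trace_support (s : estate 4) : 'cV[F]_2 -> Prop :=
  fun x => exists m, compat s m /\ x = projS m.

Definition col2 (a b : F) : 'cV[F]_2 := \col_(i < 2) nth 0 [:: a; b] i.
Definition col4 (a b c e : F) : 'cV[F]_4 := \col_(i < 4) nth 0 [:: a; b; c; e] i.

Definition qS : 'I_4 := @Ordinal 4 0 isT.
Definition qM : 'I_4 := @Ordinal 4 2 isT.

Definition sigma_entry (i j : nat) : F :=
  match i, j with
  | 0, 0 => 1 | 1, 1 => 1 | 1, 3 => -1 | 2, 0 => 1 | 2, 2 => 1 | 3, 3 => 1
  | _, _ => 0 end.
Definition Sigma : 'M[F]_4 := \matrix_(i, j) sigma_entry i j.

Definition S_init (a b x y : F) : estate 2 := EState (span [:: col2 a b]) (col2 x y).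

Definition joint_init (a b x y : F) : estate 4 :=
  EState (span [:: col4 a b 0 0; col4 0 0 1 0]) (col4 x y 0 0).

Definition Vpos : subsp 2 := span [:: col2 1 0].

End Toy.

Definition finset_of (T : finType) (P : T -> Prop) : {set T} := [set x | `[< P x >]].
Definition unif (T : finType) (A : {set T}) : T -> rat :=
  fun x => if x \in A then (#|A|%:R)^-1 else 0.
Definition marg (T U : finType) (f : T -> U) (P : T -> rat) : U -> rat :=
  fun y => \sum_(x | f x == y) P x.

(* Main.v *)
Require Import Defs.
From HB Require Import structures.
From mathcomp Require Import all_boot all_order all_algebra.
From mathcomp Require Import boolp reals ring.
Import GRing.Theory Num.Theory.
Local Open Scope ring_scope.

Section G.
Variable F : comUnitRingType.

Definition tinv_entry (i j : nat) : F :=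
  match i, j with
  | 0, 0 => 1 | 0, 2 => -1 | 1, 1 => 1 | 2, 2 => 1 | 3, 1 => 1 | 3, 3 => 1
  | _, _ => 0 end.
Definition Tinv : 'M[F]_4 := \matrix_(i, j) tinv_entry i j.

Lemma ST_Tinv : (@Sigma F)^T *m Tinv = 1%:M.
Proof.
apply/matrixP => i j; rewrite !mxE !big_ord_recl big_ord0 !mxE.
case: i => [[|[|[|[|i]]]] Hi] //; case: j => [[|[|[|[|j]]]] Hj] //=;
  rewrite /sigma_entry /tinv_entry /=; try ring.
Qed.
Lemma Tinv_ST : Tinv *m (@Sigma F)^T = 1%:M.
Proof. exact: mulmx1C ST_Tinv. Qed.

Lemma invST : invmx (@Sigma F)^T = Tinv.
Proof.
have [uS _] := mulmx1_unit ST_Tinv.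
by rewrite -[RHS](mulKmx uS) ST_Tinv mulmx1.
Qed.

Definition o0 : 'I_4 := @Ordinal 4 0 isT.
Definition o1 : 'I_4 := @Ordinal 4 1 isT.
Definition o2 : 'I_4 := @Ordinal 4 2 isT.
Definition o3 : 'I_4 := @Ordinal 4 3 isT.

Lemma l3 : @lift 4 ord0 (lift ord0 (lift ord0 ord0)) = o3. Proof. exact: val_inj. Qed.
Lemma l2 : @lift 4 ord0 (lift ord0 ord0) = o2. Proof. exact: val_inj. Qed.
Lemma l1 : @lift 4 ord0 ord0 = o1. Proof. exact: val_inj. Qed.
Lemma l0 : (ord0 : 'I_4) = o0. Proof. exact: val_inj. Qed.

Ltac xp := rewrite /dot ?big_ord_recl ?big_ord0 /= ?mxE /= ?big_ord_recl ?big_ord0 /= ?mxE /= ?l3 ?l2 ?l1 ?l0.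

Lemma span2E n (u v f : 'cV[F]_n) :
  Defs.span [:: u; v] f <-> exists c0 c1, f = c0 *: u + c1 *: v.
Proof.
split.
- by move=> [c ->]; exists (c 0%N), (c 1%N); rewrite !big_ord_recl big_ord0 addr0.
- move=> [c0 [c1 ->]]; exists (fun i => nth 0 [:: c0; c1] i).
  by rewrite !big_ord_recl big_ord0 addr0.
Qed.

Lemma span1E n (u f : 'cV[F]_n) :
  Defs.span [:: u] f <-> exists c0, f = c0 *: u.
Proof.
split.
- by move=> [c ->]; exists (c 0%N); rewrite big_ord1.
- move=> [c0 ->]; exists (fun i => c0).
  by rewrite big_ord1.
Qed.

Lemma compat_fin a b x y (m : 'cV[F]_4) :
  compat (transform (@Sigma F) (joint_init a b x y)) m <->
  m o2 0 = m o0 0 /\ a * (m o0 0 - x) + b * (m o1 0 - y + m o3 0) = 0.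
Proof.
rewrite /compat /transform /= invST; split.
- move=> [w [Hp ->]].
  have H1 : dot (Tinv *m col4 a b 0 0) w = 0.
    apply: Hp; exists (col4 a b 0 0); split => //; apply/span2E.
    by exists 1, 0; rewrite scale1r scale0r addr0.
  have H2 : dot (Tinv *m col4 0 0 1 0) w = 0.
    apply: Hp; exists (col4 0 0 1 0); split => //; apply/span2E.
    by exists 0, 1; rewrite scale1r scale0r add0r.
  move: H1 H2; xp => H1 H2; split; apply: subr0_eq.
    by apply: (etrans _ H2); ring.
  by apply: (etrans _ H1); ring.
- move=> [E1 E2]; exists (m - Sigma F *m col4 x y 0 0); split; last by rewrite subrK.
  move=> f [g [/span2E [c0 [c1 ->]] ->]]; xp.
  rewrite E1; have E3 : c0 * (a * (m o0 0 - x) + b * (m o1 0 - y + m o3 0)) = 0 by rewrite E2 mulr0.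
  by apply: (etrans _ E3); ring.
Qed.

Lemma k1 : @lift 2 ord0 ord0 = ord_max. Proof. exact: val_inj. Qed.
Ltac xq := rewrite /dot ?big_ord_recl ?big_ord0 /= ?mxE /= ?big_ord_recl ?big_ord0 /= ?mxE /= ?k1.

Lemma compatE n (s : estate F n) m : compat s m <-> perp (espace s) (m - evec s).
Proof.
split; first by move=> [w [H ->]]; rewrite addrK.
by move=> H; exists (m - evec s); rewrite subrK.
Qed.

Lemma perp0 n (V : subsp F n) : perp V 0.
Proof. by move=> f _; rewrite /dot big1 // => i _; rewrite mxE mulr0. Qed.

Lemma projSE (m : 'cV[F]_4) : projS m ord0 0 = m o0 0 /\ projS m ord_max 0 = m o1 0.
Proof. by rewrite !mxE; split; congr (m _ 0); apply: val_inj. Qed.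

Lemma cV2_eq (u v : 'cV[F]_2) : u ord0 0 = v ord0 0 -> u ord_max 0 = v ord_max 0 -> u = v.
Proof.
move=> H0 H1; apply/matrixP => i j; rewrite (ord1 j).
case: i => [[|[|i]] Hi].
- by rewrite (_ : Ordinal Hi = ord0) //; apply: val_inj.
- by rewrite (_ : Ordinal Hi = ord_max) //; apply: val_inj.
- by [].
Qed.

Definition PP a x (b : F) (z : 'cV[F]_2) := exists p, a * (z ord0 0 - x) + b * p = 0.

Lemma trace_fin a b x y z :
  trace_support (transform (@Sigma F) (joint_init a b x y)) z <-> PP a x b z.
Proof.
split.
- move=> [m [/compat_fin [E1 E2] ->]]; rewrite /PP; have [-> _] := projSE m.
  by exists (m o1 0 - y + m o3 0).
- move=> [p Hp]; exists (col4 (z ord0 0) (z ord_max 0) (z ord0 0) (p - z ord_max 0 + y)).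
  split.
    apply/compat_fin; rewrite !mxE /=; split => //.
    by apply: (etrans _ Hp); ring.
  have [H0 H1] := projSE (col4 (z ord0 0) (z ord_max 0) (z ord0 0) (p - z ord_max 0 + y)).
  by apply: cV2_eq; rewrite ?H0 ?H1 !mxE.
Qed.

Lemma mix_S a b x y z :
  mix_post (S_init a b x y) (@Vpos F) z <-> PP a x b z.
Proof.
split.
- move=> [vpi [v' [[m [/compatE Hm /compatE Hm']] [[/compatE Hv _] /compatE Hz]]]].
  have hm : dot (col2 a b) (m - col2 x y) = 0.
    by apply: Hm; apply/span1E; exists 1; rewrite scale1r.
  have hm' : dot (col2 1 0) (m - vpi) = 0.
    by apply: Hm'; apply/span1E; exists 1; rewrite scale1r.
  have hv : dot (col2 1 0) (v' - vpi) = 0.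
    by apply: Hv; apply/span1E; exists 1; rewrite scale1r.
  have hz : dot (col2 1 0) (z - v') = 0.
    apply: Hz; exists (col2 1 0), 0; split; first by apply/span1E; exists 1; rewrite scale1r.
    split; last by rewrite addr0.
    split; first by apply/span1E; exists 0; rewrite scale0r.
    by move=> g _; rewrite /pb2 !mxE !mul0r subrr.
  move: hm hm' hv hz; xq => hm hm' hv hz.
  exists (m ord_max 0 - y).
  have E : a * (m ord0 0 - x) + b * (m ord_max 0 - y) + a * ((1 * (z ord0 0 - v' ord0 0) + (0 * (z ord_max 0 - v' ord_max 0) + 0))
     + (1 * (v' ord0 0 - vpi ord0 0) + (0 * (v' ord_max 0 - vpi ord_max 0) + 0))
     - (1 * (m ord0 0 - vpi ord0 0) + (0 * (m ord_max 0 - vpi ord_max 0) + 0))) = 0.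
    by rewrite hz hv hm' !addr0 subrr mulr0 addr0 -hm; ring.
  by apply: (etrans _ E); ring.
- move=> [p Hp]; exists z, z; split; [|split; [split|]].
  + exists (col2 (z ord0 0) (y + p)); split; apply/compatE => f /span1E [c ->]; xq.
    * have E : c * (a * (z ord0 0 - x) + b * p) = 0 by rewrite Hp mulr0.
      by apply: (etrans _ E); ring.
    * ring.
  + by apply/compatE; rewrite subrr; apply: perp0.
  + apply/compatE => f /= [/span1E [t ->] Hc].
    have : pb2 (t *: col2 a b) (col2 1 0) = 0.
      by apply: Hc; apply/span1E; exists 1; rewrite scale1r.
    rewrite /pb2 !mxE /= => Htb; xq.
    have Htb' : t * b = 0.
      rewrite -[LHS]opprK; apply/eqP; rewrite oppr_eq0; apply/eqP; apply: (etrans _ Htb); ring.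
    have E : t * (a * (z ord0 0 - x) + b * p) - (t * b) * p + (t * b) * (z ord_max 0 - y) = 0.
      by rewrite Hp Htb' !mul0r mulr0 subrr addr0.
    by apply: (etrans _ E); ring.
  + by apply/compatE; rewrite subrr; apply: perp0.
Qed.
End G.

Section Fin.
Variable F : finComUnitRingType.
Variables a b x y : F.

Let fin := transform (@Sigma F) (joint_init a b x y).
Let A := finset_of (compat fin).
Let B := finset_of (mix_post (S_init a b x y) (@Vpos F)).
Let K := [set t : F | b * t == 0].

Lemma cV4_eq (u v : 'cV[F]_4) : u o0 0 = v o0 0 -> u o1 0 = v o1 0 ->
  u o2 0 = v o2 0 -> u o3 0 = v o3 0 -> u = v.
Proof.
move=> H0 H1 H2 H3; apply/matrixP => i j; rewrite (ord1 j).
case: i => [[|[|[|[|i]]]] Hi] //.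
- by rewrite (_ : Ordinal Hi = o0) //; apply: val_inj.
- by rewrite (_ : Ordinal Hi = o1) //; apply: val_inj.
- by rewrite (_ : Ordinal Hi = o2) //; apply: val_inj.
- by rewrite (_ : Ordinal Hi = o3) //; apply: val_inj.
Qed.

Lemma inA m : (m \in A) = `[< compat fin m >].
Proof. by rewrite /A /finset_of inE. Qed.
Lemma inB z : (z \in B) = `[< mix_post (S_init a b x y) (@Vpos F) z >].
Proof. by rewrite /B /finset_of inE. Qed.

Lemma card_fib z : #|[set m | (projS m == z) && (m \in A)]| = if z \in B then #|K| else 0%N.
Proof.
case: ifPn => zB.
- move: zB; rewrite inB => /asboolP /mix_S [p Hp].
  pose s := p - z ord_max 0 + y.
  have -> : [set m | (projS m == z) && (m \in A)] =
     [set col4 (z ord0 0) (z ord_max 0) (z ord0 0) (s + t) | t in K].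
    apply/setP => m; rewrite !inE ?inA; apply/andP/imsetP.
    + move=> [/eqP Hz /asboolP /compat_fin [E1 E2]].
      have [P0 P1] := projSE _ m; rewrite Hz in P0 P1.
      exists (m o3 0 - s).
        rewrite inE; apply/eqP.
        have E : (a * (m o0 0 - x) + b * (m o1 0 - y + m o3 0)) - (a * (z ord0 0 - x) + b * p) = 0.
          by rewrite E2 Hp subrr.
        apply: (etrans _ E); rewrite /s P0 P1; ring.
      apply: cV4_eq; rewrite !mxE /= ?E1 -?P0 -?P1 //.
      by rewrite addrC subrK.
    + move=> [t]; rewrite inE => /eqP Ht ->; split.
        have [P0 P1] := projSE _ (col4 (z ord0 0) (z ord_max 0) (z ord0 0) (s + t)).
        by apply/eqP; apply: cV2_eq; rewrite ?P0 ?P1 !mxE.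
      apply/asboolP/compat_fin; rewrite !mxE /=; split => //.
      have E : a * (z ord0 0 - x) + b * p + b * t = 0 by rewrite Hp Ht addr0.
      by apply: (etrans _ E); rewrite /s; ring.
  rewrite card_imset //.
  by move=> t1 t2 /(congr1 (fun m : 'cV[F]_4 => m o3 0)); rewrite !mxE /= => /addrI.
- apply/eqP; rewrite cards_eq0; apply/eqP/setP => m; rewrite !inE.
  apply/negbTE; apply/negP => /andP [/eqP Hz]; move=> /asboolP Hm.
  move: zB; rewrite inB => /asboolP; apply; apply/mix_S/trace_fin.
  by exists m; split; [exact: Hm | rewrite Hz].
Qed.

Lemma card_A : #|A| = (#|B| * #|K|)%N.
Proof.
rewrite -sum1_card (partition_big (@projS F) predT) //=.
transitivity (\sum_(z : 'cV[F]_2) (if z \in B then #|K| else 0%N)).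
  apply: eq_bigr => z _; rewrite -card_fib -sum1_card; apply: eq_bigl => m.
  by rewrite inE andbC.
by rewrite -big_mkcond /= sum_nat_const.
Qed.

Lemma distr_eq : marg (@projS F) (unif A) =1 unif B.
Proof.
move=> z; rewrite /marg /unif -big_mkcondr /= sumr_const.
have -> : #|[pred m | (projS m == z) && (m \in A)]| = #|[set m | (projS m == z) && (m \in A)]|.
  by apply: eq_card => m; rewrite !inE.
rewrite card_fib card_A; case: ifPn => // zB.
have K0 : (0 < #|K|)%N by apply/card_gt0P; exists 0; rewrite inE mulr0.
have B0 : (0 < #|B|)%N by apply/card_gt0P; exists z.
rewrite -(mulr_natr ((#|B| * #|K|)%:R^-1 : rat) #|K|) natrM invfM -mulrA mulVf ?mulr1 // pnatr_eq0 -lt0n.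
by [].
Qed.
End Fin.

Theorem theorem4 :
  (* discrete case: Omega = Z_d^4 *)
  (forall (d : nat), (1 < d)%N -> forall a b x y : 'Z_d,
     let fin := transform (@Sigma _) (joint_init a b x y) in
     (forall m, compat fin m -> m qM 0 = m qS 0) /\
     (prime d ->
        marg (@projS _) (unif (finset_of (compat fin)))
        =1 unif (finset_of (mix_post (S_init a b x y) (@Vpos _)))))
  /\
  (* continuous case: Omega = R^4 *)
  (forall (R : realType) (a b x y : R),
     let fin := transform (@Sigma _) (joint_init a b x y) in
     (forall m, compat fin m -> m qM 0 = m qS 0) /\
     (forall z, trace_support fin z <-> mix_post (S_init a b x y) (@Vpos _) z)).
Proof.
split.
- move=> d _ a b x y fin; split.
  + by move=> m /compat_fin [E1 _].
  + by move=> _; apply: distr_eq.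
- move=> R a b x y fin; split.
  + by move=> m /compat_fin [E1 _].
  + move=> z; split => H; [apply/mix_S/trace_fin | apply/trace_fin/mix_S]; exact H.
Qed.
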